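(* For every integer $n \geq 9$, there exists a separating union-closed family $\mathcal{A}$ with base set $[n]$, height $h=5$ and $|\mathcal{B}(\mathcal{A})|=1$ such that \[\mathrm{Avg}(\mathcal{A}) = \frac{\sum_{A \in \mathcal{A}}|A|}{|\mathcal{A}|} < \frac{n}{2}.\]
   Context: A family of sets $\mathcal{A}$ is union-closed if it is a finite family of distinct finite sets with at least one nonempty member set, and $X,Y\in\mathcal{A}$ implies $X\cup Y\in\mathcal{A}$ (the empty set may be a member). For a family $\mathcal{F}$, $b(\mathcal{F})=\bigcup_{F\in\mathcal{F}}F$; the base set $b(\mathcal{A})$ is denoted $[n]=\{1,\dots,n\}$. $\mathcal{A}$ is separating if for any two distinct $x,y\in[n]$ there is $A\in\mathcal{A}$ containing exactly one of $x,y$. A chain in $\mathcal{A}$ is a subfamily any two distinct members of which are comparable under proper inclusion; the height $h$ of $\mathcal{A}$ is the maximum size of a chain in $\mathcal{A}$. For real $x\ge 0$, $\mathcal{A}_{<x}=\{A\in\mathcal{A} : |A|<x\}$. For $\mathcal{S}\subseteq\mathcal{A}$ and $S\in\mathcal{S}$, $\mathrm{irr}_{\mathcal{S}}(S)=\{s\in S : s\notin b(\mathcal{S}\setminus\{S\})\}$, and $\mathcal{S}$ is irredundant if $\mathrm{irr}_{\mathcal{S}}(S)\neq\emptyset$ for every $S\in\mathcal{S}$. Set $B=b(\mathcal{A}_{<n/2})$, and let $\mathcal{B}(\mathcal{A})$ denote any irredundant subfamily of $\mathcal{A}_{<n/2}$ of minimum size such that $b(\mathcal{B}(\mathcal{A}))=B$.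 *)

(* Defs.v *)
From mathcomp Require Import all_boot all_order all_algebra.
Set Implicit Arguments. Unset Strict Implicit. Unset Printing Implicit Defensive.
Import Order.TTheory GRing.Theory Num.Theory.

Section Fam.
Variable n : nat.
Local Notation fam := {set {set 'I_n}}.

Definition bfam (F : fam) : {set 'I_n} := \bigcup_(X in F) X.

Definition union_closed (A : fam) : Prop :=
  (exists2 X, X \in A & X != set0) /\
  (forall X Y, X \in A -> Y \in A -> X :|: Y \in A).

Definition separating (A : fam) : Prop :=
  forall x y : 'I_n, x != y -> exists2 X, X \in A & (x \in X) != (y \in X).

Definition is_chain (A C : fam) : Prop :=
  C \subset A /\
  (forall X Y, X \in C -> Y \in C -> X != Y -> (X \proper Y) || (Y \proper X)).

Definition height_eq (A : fam) (h : nat) : Prop :=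
  (exists C, is_chain A C /\ #|C| = h) /\ (forall C, is_chain A C -> #|C| <= h).

(* A_{<x} with x = n/2 : members of size < n/2, i.e. 2|X| < n *)
Definition small_part (A : fam) : fam := [set X in A | (#|X|).*2 < n].

Definition irr (S : fam) (X : {set 'I_n}) : {set 'I_n} := X :\: bfam (S :\ X).

Definition irredundant (S : fam) : Prop := forall X, X \in S -> irr S X != set0.

(* candidates for B(A): irredundant subfamilies of A_{<n/2} with union B = b(A_{<n/2}) *)
Definition B_candidate (A S : fam) : Prop :=
  [/\ S \subset small_part A, bfam S = bfam (small_part A) & irredundant S].

Definition B_size_eq (A : fam) (k : nat) : Prop :=
  (exists S, B_candidate A S /\ #|S| = k) /\
  (forall S, B_candidate A S -> k <= #|S|).

Definition avg (A : fam) : rat :=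
  ((\sum_(X in A) #|X|)%:R / (#|A|)%:R)%R.

End Fam.

(* Main.v *)
Require Import Defs.
From mathcomp Require Import all_boot all_order all_algebra zify.
Import Order.TTheory GRing.Theory Num.Theory.
Set Implicit Arguments. Unset Strict Implicit. Unset Printing Implicit Defensive.

Section C.
Variable n : nat.
Hypothesis n9 : 9 <= n.
Definition mm := n.-1./2.
Lemma mmE : n.-1 = odd n.-1 + mm.*2.
Proof. by rewrite /mm odd_double_half. Qed.
Lemma mm4 : 4 <= mm.
Proof. have := mmE; lia. Qed.
Lemma mm2n : mm.*2 < n.
Proof. have := mmE; lia. Qed.

Definition Lset k : {set 'I_n} := [set i : 'I_n | i < k].

Lemma card_Lset k : k <= n -> #|Lset k| = k.
Proof.
move=> H.
have -> : Lset k = [set widen_ord H i | i in 'I_k].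
  apply/setP => j; rewrite inE; apply/idP/imsetP => [jk | [i _ ->]].
    by exists (Ordinal jk) => //; apply: val_inj.
  exact: (ltn_ord i).
rewrite card_imset ?card_ord // => i j /(congr1 val) /= e; exact: val_inj.
Qed.

Lemma Lset_sub a b : a <= b -> Lset a \subset Lset b.
Proof. by move=> ab; apply/subsetP => i; rewrite !inE => /leq_trans; apply. Qed.

Lemma Lset_proper a b : a < b -> b <= n -> Lset a \proper Lset b.
Proof.
move=> ab bn; rewrite properEcard Lset_sub ?(ltnW ab) // !card_Lset //.
exact: leq_trans (ltnW ab) bn.
Qed.

Definition SS := Lset mm.
Definition SS1 := Lset mm.+1.
Lemma cardS : #|SS| = mm.
Proof. rewrite card_Lset //; have := mm2n; lia. Qed.
Lemma cardS' : #|SS1| = mm.+1.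
Proof. rewrite card_Lset //; have := mm2n; lia. Qed.

Definition D k := [set X : {set 'I_n} | X \subset SS & #|X| == k].
Definition Lg := [set X : {set 'I_n} | SS1 \subset X & n.-1 <= #|X|].
Definition AA := D (mm - 2) :|: D (mm - 1) :|: D mm :|: Lg.

Lemma inAA X : (X \in AA) = (X \subset SS) && (mm - 2 <= #|X|) || (SS1 \subset X) && (n.-1 <= #|X|).
Proof.
rewrite !inE; case: (boolP (X \subset SS)) => XS /=.
  have := subset_leq_card XS; rewrite cardS => h.
  congr (_ || _); have := mm4 => m4; apply/idP/idP.
    by move=> /orP[/orP[]|] /eqP ->; lia.
  move: #|X| h => k h h2; have : k = mm-2 \/ k = mm-1 \/ k = mm by lia.
  by case=> [->|[->|->]]; rewrite eqxx ?orbT.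
by [].
Qed.

Lemma n0 : 0 < n. Proof. lia. Qed.
Definition o0 : 'I_n := Ordinal n0.

Lemma setT_AA : [set: 'I_n] \in AA.
Proof. by rewrite inAA subsetT cardsT card_ord leq_pred orbT. Qed.

Lemma SS_AA : SS \in AA.
Proof. by rewrite inAA subxx cardS leq_subr. Qed.

Lemma SS_n0 : SS != set0.
Proof. by rewrite -card_gt0 cardS; have := mm4; lia. Qed.

Lemma coS (z : 'I_n) : mm < z -> [set~ z] \in AA.
Proof.
move=> hz; rewrite inAA cardsC1 card_ord leqnn andbT orbC; apply/orP; left.
apply/subsetP => i; rewrite !inE => hi; apply/eqP => e; move: hi hz; rewrite e; lia.
Qed.

Lemma AA_uc : union_closed AA.
Proof.
split.
  exists [set: 'I_n]; first exact: setT_AA.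
  by apply/set0Pn; exists o0.
have big : forall Z W : {set 'I_n}, Z \subset W -> (SS1 \subset Z) && (n.-1 <= #|Z|) ->
    (SS1 \subset W) && (n.-1 <= #|W|).
  move=> Z W ZW /andP[h1 h2]; rewrite (subset_trans h1 ZW) /=.
  exact: leq_trans h2 (subset_leq_card ZW).
move=> X Y; rewrite !inAA => /orP[/andP[X1 X2]|XL] /orP[/andP[Y1 Y2]|YL].
- rewrite subUset X1 Y1 /=; apply/orP; left.
  exact: leq_trans X2 (subset_leq_card (subsetUl X Y)).
- by rewrite (big Y) ?orbT // subsetUr.
- by rewrite (big X) ?orbT // subsetUl.
- by rewrite (big X) ?orbT // subsetUl.
Qed.

Lemma AA_b : bfam AA = [set: 'I_n].
Proof.
apply/eqP; rewrite eqEsubset subsetT /=.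
exact: (bigcup_max _ setT_AA).
Qed.

Lemma AA_sep : separating AA.
Proof.
move=> x y xy.
have yx : y != x by rewrite eq_sym.
case: (ltnP x mm) => hx; case: (ltnP y mm) => hy.
- exists (SS :\ y).
    rewrite inAA subD1set /=; apply/orP; left.
    have := cardsD1 y SS; rewrite cardS inE hy /= => e.
    have := mm4; move: #|SS :\ y| e => k e; lia.
  by rewrite !inE xy hx eqxx.
- exists SS; first exact: SS_AA.
  by rewrite !inE hx ltnNge hy.
- exists SS; first exact: SS_AA.
  by rewrite !inE hy ltnNge hx.
- case: (eqVneq (nat_of_ord y) mm) => ey.
    have ex : nat_of_ord x != mm.
      apply/eqP => e; move/eqP: xy; apply; apply: val_inj; by rewrite /= e ey.
    exists [set~ x]; first by apply: coS; lia.
    by rewrite !inE eqxx yx.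
  exists [set~ y]; first by apply: coS; lia.
  by rewrite !inE eqxx xy.
Qed.

Definition ks := [:: mm - 2; mm - 1; mm; n.-1; n].

Lemma ks_le k : k \in ks -> k <= n.
Proof.
have := mm2n => h.
rewrite !inE => /orP[/eqP->|/orP[/eqP->|/orP[/eqP->|/orP[/eqP->|/eqP->]]]]; lia.
Qed.

Lemma cardAA X : X \in AA -> #|X| \in ks.
Proof.
have := mm4 => h4; have := mm2n => h2.
rewrite inAA => /orP[/andP[XS h]|/andP[_ h]].
  have := subset_leq_card XS; rewrite cardS.
  move: #|X| h => k h h'.
  have : k = mm-2 \/ k = mm-1 \/ k = mm by lia.
  by case=> [->|[->|->]]; rewrite !inE eqxx ?orbT.
have := max_card (mem X); rewrite card_ord.
move: #|X| h => k h h'.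
have : k = n.-1 \/ k = n by lia.
by case=> [->|->]; rewrite !inE eqxx ?orbT.
Qed.

Lemma chain_le C : is_chain AA C -> #|C| <= 5.
Proof.
case=> CA Cch.
rewrite cardE -(size_map (fun X : {set 'I_n} => #|X|)).
have U : uniq (map (fun X : {set 'I_n} => #|X|) (enum C)).
  rewrite map_inj_in_uniq ?enum_uniq // => X Y; rewrite !mem_enum => XC YC e.
  case: (eqVneq X Y) => // ne; have := Cch X Y XC YC ne.
  by rewrite !properEcard e ltnn !andbF.
apply: (uniq_leq_size (s2 := ks) U) => k /mapP [X XC ->].
apply: cardAA; apply: (subsetP CA); by rewrite mem_enum in XC.
Qed.

Lemma LsetAA k : k \in ks -> Lset k \in AA.
Proof.
have := mm4 => h4; have := mm2n => h2.
move=> kin; have kn := ks_le kin.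
rewrite inAA card_Lset // /SS /SS1.
move: kin; rewrite !inE => /orP[/eqP->|/orP[/eqP->|/orP[/eqP->|/orP[/eqP->|/eqP->]]]].
- by apply/orP; left; rewrite Lset_sub ?leq_subr ?leqnn.
- apply/orP; left; rewrite Lset_sub ?leq_subr //=; lia.
- by apply/orP; left; rewrite Lset_sub ?leq_subr ?leqnn.
- apply/orP; right; rewrite Lset_sub ?leqnn //=; lia.
- apply/orP; right; rewrite Lset_sub ?leq_pred //=; lia.
Qed.

Definition CC := [set X | X \in map Lset ks].

Lemma CC_chain : is_chain AA CC.
Proof.
split.
  by apply/subsetP => X; rewrite in_set => /mapP [k kin ->]; apply: LsetAA.
move=> X Y; rewrite !in_set => /mapP [a ain ->] /mapP [b bin ->] ne.
have an := ks_le ain; have bn := ks_le bin.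
case: (ltngtP a b) => ab.
- by rewrite Lset_proper.
- by rewrite orbC Lset_proper.
- by rewrite ab eqxx in ne.
Qed.

Lemma CC_card : #|CC| = 5.
Proof.
apply/eqP; rewrite eqn_leq chain_le ?CC_chain //=.
have -> : 5 = size (map Lset ks) by [].
rewrite cardE; apply: uniq_leq_size.
  rewrite map_inj_in_uniq.
    apply: (sorted_uniq ltn_trans ltnn).
    have := mm4 => h4; have := mm2n => h2.
    rewrite /= !andbT; repeat (apply/andP; split); lia.
  move=> a b ain bin e; have := congr1 (fun X : {set 'I_n} => #|X|) e.
  by rewrite /= !card_Lset ?ks_le.
  by move=> X XC; rewrite mem_enum in_set.
exact: CC_chain.
Qed.

Lemma AA_height : height_eq AA 5.
Proof.
split; first by exists CC; split; [exact: CC_chain | exact: CC_card].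
exact: chain_le.
Qed.


Lemma sp_sub X : X \in small_part AA -> X \subset SS.
Proof.
rewrite inE inAA => /andP[/orP[/andP[h _]|/andP[_ h]] h2] //; exfalso.
move: #|X| h h2 => k h h2; lia.
Qed.

Lemma SS_sp : SS \in small_part AA.
Proof. by rewrite inE SS_AA cardS mm2n. Qed.

Lemma bsp : bfam (small_part AA) = SS.
Proof.
apply/eqP; rewrite eqEsubset; apply/andP; split.
  apply/subsetP => x /bigcupP [X XS xX]; exact: (subsetP (sp_sub XS)).
exact: (bigcup_max _ SS_sp).
Qed.

Lemma AA_B : B_size_eq AA 1.
Proof.
split.
  exists [set SS]; split; last exact: cards1.
  split.
  - by rewrite sub1set SS_sp.
  - by rewrite bsp /bfam big_set1.
  - move=> X /set1P ->; rewrite /irr setDv /bfam big_set0 setD0; exact: SS_n0.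
move=> S0 [_ hb _]; rewrite lt0n cards_eq0; apply/eqP => e.
move: hb; rewrite e bsp /bfam big_set0 => e2.
by move: SS_n0; rewrite -e2 eqxx.
Qed.

Lemma sumU (A B : {set {set 'I_n}}) (F : {set 'I_n} -> nat) : [disjoint A & B] ->
  \sum_(i in A :|: B) F i = \sum_(i in A) F i + \sum_(i in B) F i.
Proof. move=> dAB; rewrite -bigU //; apply: eq_bigl => i; by rewrite inE. Qed.

Lemma sumD k (F : {set 'I_n} -> nat) : \sum_(X in D k) F X = \sum_(X in D k) F X. Proof. by []. Qed.

Lemma cardD k : #|D k| = 'C(mm, k).
Proof. by rewrite /D cards_draws cardS. Qed.

Lemma sumDk k : \sum_(X in D k) #|X| = 'C(mm, k) * k.
Proof.
rewrite -cardD -sum_nat_const; apply: eq_bigr => X; by rewrite inE => /andP[_ /eqP].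
Qed.

Lemma Lg_setT : [set: 'I_n] \in Lg.
Proof. by rewrite inE subsetT cardsT card_ord leq_pred. Qed.

Lemma sumLg : \sum_(X in Lg) #|X| = n + #|Lg :\ setT| * n.-1.
Proof.
rewrite (big_setD1 _ Lg_setT) cardsT card_ord -sum_nat_const; congr (_ + _).
apply: eq_bigr => X; rewrite !inE => /andP[ne /andP[_ h]].
have := max_card (mem X); rewrite card_ord => h2.
have : #|X| != n.
  apply: contra ne => /eqP e; by rewrite eqEcard subsetT cardsT card_ord e leqnn.
move: #|X| h h2 => k h h2 h3; lia.
Qed.

Lemma cardLg : #|Lg| = 1 + #|Lg :\ setT|.
Proof. by rewrite (cardsD1 setT) Lg_setT. Qed.

Lemma cardLg' : #|Lg :\ setT| <= n - mm.+1.
Proof.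
have : Lg :\ setT \subset [set [set~ j] | j in ~: SS1].
  apply/subsetP => X; rewrite !inE => /andP[ne /andP[sX h]].
  have : ~~ ([set: 'I_n] \subset X) by apply: contra ne => sub; rewrite eqEsubset subsetT sub.
  case/subsetPn => j _ jX.
  apply/imsetP; exists j.
    by rewrite inE; apply: contra jX; apply: (subsetP sX).
  apply/eqP; rewrite eqEcard cardsC1 card_ord h andbT.
  by apply/subsetP => i iX; rewrite in_setC1; apply/eqP => e; move: jX; rewrite -e iX.
move/subset_leq_card/leq_trans; apply.
apply: leq_trans (leq_imset_card _ _) _.
have := cardsC SS1; rewrite cardS' card_ord => e; lia.
Qed.

Lemma disj1 a b : a != b -> [disjoint D a & D b].
Proof.
move=> ab; rewrite disjoint_subset; apply/subsetP => X; rewrite !inE => /andP[_ /eqP ->].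
by rewrite (negbTE ab) andbF.
Qed.

Lemma AA_sums : \sum_(X in AA) #|X| = 'C(mm, mm-2) * (mm-2) + 'C(mm, mm-1) * (mm-1) + 'C(mm,mm) * mm
   + (n + #|Lg :\ setT| * n.-1)
 /\ #|AA| = 'C(mm, mm-2) + 'C(mm, mm-1) + 'C(mm,mm) + (1 + #|Lg :\ setT|).
Proof.
have h4 := mm4; have h2 := mm2n.
have d12 : [disjoint D (mm-2) & D (mm-1)] by apply: disj1; apply/eqP; lia.
have d123 : [disjoint D (mm-2) :|: D (mm-1) & D mm].
  rewrite disjoint_subset; apply/subsetP => X; rewrite !inE => /orP[]/andP[_ /eqP ->];
  rewrite andbC; apply/negP => /andP[/eqP ? _]; lia.
have d4 : [disjoint D (mm-2) :|: D (mm-1) :|: D mm & Lg].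
  rewrite disjoint_subset; apply/subsetP => X; rewrite !inE => /orP[/orP[]|] /andP[XS _];
  apply/negP => /andP[_ h]; have := subset_leq_card XS; rewrite cardS;
  move: #|X| h => k h h'; lia.
split.
  by rewrite /AA !sumU // !sumDk sumLg.
rewrite -!sum1_card /AA !sumU // !sum1_card !cardD cardLg.
by [].
Qed.

End C.

Lemma arith m n c L : 4 <= m -> 2*c = m*(m-1) -> n.-1 = odd n.-1 + m.*2 -> L <= n - m.+1 -> 9 <= n ->
 (c*(m-2) + m*(m-1) + 1 * m + (n + L*n.-1)) * 2 < n * (c + m + 1 + (1 + L)).
Proof.
move=> m4 hc hn hL n9.
have [k km] : exists k, m = k + 4 by exists (m - 4); lia.
subst m.
have -> : k + 4 - 2 = k + 2 by lia.
have -> : k + 4 - 1 = k + 3 by lia.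
have e1 : k + 4 - 1 = k + 3 by lia.
rewrite e1 in hc.
have h2 : 2 * (c * k) = (k+4)*(k+3)*k by rewrite mulnA hc.
have [hn'|hn'] : n = 2*k+9 \/ n = 2*k+10 by move: (odd n.-1) hn => b; case: b => /=; lia.
- subst n.
  have -> : (2*k+9).-1 = 2*k+8 by lia.
  have hL' : L <= k + 4 by lia.
  have h3 : L * k <= (k+4)*k by rewrite leq_mul2r hL' orbT.
  lia.
- subst n.
  have -> : (2*k+10).-1 = 2*k+9 by lia.
  have hL' : L <= k + 5 by lia.
  have h3 : L * k <= (k+5)*k by rewrite leq_mul2r hL' orbT.
  lia.
Qed.

Theorem lemma3p1 : forall n : nat, 9 <= n ->
  exists A : {set {set 'I_n}},
    [/\ union_closed A, bfam A = [set: 'I_n], separating A,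
        height_eq A 5
      & B_size_eq A 1 /\ (avg A < (n%:R / 2%:R)%R)%R].
Proof.
move=> n n9; exists (AA n); split.
- by apply: AA_uc.
- by apply: AA_b.
- by apply: AA_sep.
- by apply: AA_height.
split; first by apply: AA_B.
have [hs hc] := AA_sums n9.
rewrite /avg hs hc.
have h4 := mm4 n9.
have hL := cardLg' n9.
move: #|Lg n :\ setT| hL => L hL.
rewrite binn (bin_sub (_ : 1 <= mm n)) ?bin1; last by lia.
rewrite (bin_sub (_ : 2 <= mm n)); last by lia.
have c2 : 2 * 'C(mm n, 2) = mm n * (mm n - 1).
  by rewrite -(mul_bin_diag (mm n) 1) bin1 subn1.
move: ('C(mm n, 2)) c2 => c c2.
rewrite ltr_pdivrMr ?ltr0n; last by lia.
rewrite mulrAC ltr_pdivlMr ?ltr0n // -!natrM ltr_nat.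
exact: (arith h4 c2 (mmE n) hL n9).
Qed.
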